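(* In the ACS setup of the context, with $M_k=\dfrac{|P_k\cap\mathcal{H}_0|}{1+|N^-_k|}$, one has $$\mathbb{E}\big[M_k\,\big|\,|P_k\cap\mathcal{H}_0|+|N^-_k|\big]\le\frac{m}{n-k+1},\qquad\text{hence}\qquad \mathbb{E}[M_k]\le\frac{m}{n-k+1}.$$
   Context: Setup. Let $n,m\ge 1$, $0\le k\le n$. For $i\in[n+m]$ let $X_i\in\mathcal{X}$, $Y_i\in\mathbb{R}$, $\mathcal{C}_i\subseteq\mathbb{R}$, with $\{(X_i,Y_i,\mathcal{C}_i)\}_{i}$ jointly exchangeable. $(A_1,\dots,A_{n+m})$ is uniform over binary vectors with exactly $n$ zeros and $m$ ones, independent of the data ($A_i=0$: labeled, $A_i=1$: test). $\mathcal{H}_0=\{i:A_i=1,Y_i\in\mathcal{C}_i\}$. $(\pi(1),\dots,\pi(k))$ is a uniformly random ordered choice of $k$ distinct indices from $\{i:A_i=0\}$, independent of all else; $U_k=[n+m]\setminus\{\pi(1),\dots,\pi(k)\}$, $N^-_k=\{i\in U_k:A_i=0,Y_i\in\mathcal{C}_i\}$, $P_k=\{i\in U_k:A_i=1\}$. *)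

(* Defs.v *)
From HB Require Import structures.
From mathcomp Require Import all_boot all_order all_algebra all_fingroup.
From mathcomp Require Import all_classical all_reals all_analysis.
Set Implicit Arguments. Unset Strict Implicit. Unset Printing Implicit Defensive.
Import Order.TTheory GRing.Theory Num.Theory.
Local Open Scope classical_set_scope.
Local Open Scope ring_scope.

(* One data point (X_i, Y_i, C_i) lives in Xt * R * set R.
   inC t  <=>  Y_i \in C_i. *)
Definition inC {Xt : Type} {R : realType} (t : Xt * R * set R) : bool :=
  t.1.2 \in t.2.

Section ACS.
Variables (n m k : nat).
Local Notation N := (n + m)%N.

(* a i = true  <->  A_i = 1 (test point);  a i = false <-> A_i = 0 (labeled). *)
Definition valid_A (a : 'I_N -> bool) : bool := #|[pred i | ~~ a i]| == n.

(* p = (pi(1),...,pi(k)): an ordered choice of k distinct labeled indices. *)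
Definition valid_pi (a : 'I_N -> bool) (p : 'I_k -> 'I_N) : bool :=
  injectiveb p && [forall j, ~~ a (p j)].

Definition removed (p : 'I_k -> 'I_N) : {set 'I_N} := [set p j | j : 'I_k].

(* z i = true <-> Y_i \in C_i *)
Definition H0set (a z : 'I_N -> bool) : {set 'I_N} := [set i | a i && z i].
Definition Nminus (a z : 'I_N -> bool) (p : 'I_k -> 'I_N) : {set 'I_N} :=
  [set i | (i \notin removed p) && ~~ a i && z i].
Definition Pset (a : 'I_N -> bool) (p : 'I_k -> 'I_N) : {set 'I_N} :=
  [set i | (i \notin removed p) && a i].

Definition acsS (a z : 'I_N -> bool) (p : 'I_k -> 'I_N) : nat :=
  (#|Pset a p :&: H0set a z| + #|Nminus a z p|)%N.

Definition acsM {R : realType} (a z : 'I_N -> bool) (p : 'I_k -> 'I_N) : R :=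
  (#|Pset a p :&: H0set a z|)%:R / (1 + #|Nminus a z p|)%N%:R.

End ACS.

Definition data_event {Om Xt : Type} {R : realType} {N : nat}
  (X : 'I_N -> Om -> Xt) (Y : 'I_N -> Om -> R) (C : 'I_N -> Om -> set R)
  (B : 'I_N -> set (Xt * R * set R)) : set Om :=
  \bigcap_i [set w | B i (X i w, Y i w, C i w)].

(* Joint exchangeability of {(X_i,Y_i,C_i)}_i w.r.t. the sigma-algebra G on
   the space of triples: the joint law is invariant under every permutation
   of indices (checked on measurable rectangles, which generate the product
   sigma-algebra). *)
Definition exchangeable {d} {Om : measurableType d} {Xt : Type} {R : realType}
  {N : nat} (P : probability Om R) (G : set (set (Xt * R * set R)))
  (X : 'I_N -> Om -> Xt) (Y : 'I_N -> Om -> R) (C : 'I_N -> Om -> set R) :=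
  forall (s : 'S_N) (B : 'I_N -> set (Xt * R * set R)),
    (forall i, G (B i)) ->
    P (data_event (fun i => X (s i)) (fun i => Y (s i)) (fun i => C (s i)) B)
    = P (data_event X Y C B).

(* Main.v *)
Require Import Defs.
From HB Require Import structures.
From mathcomp Require Import all_boot all_order all_algebra all_fingroup.
From mathcomp Require Import all_classical all_reals all_analysis.
Import Order.TTheory GRing.Theory Num.Theory.
Local Open Scope classical_set_scope.
Local Open Scope ring_scope.
From mathcomp Require Import measurable_realfun.
From mathcomp Require Import zify ring lra.
Module Aux.
From mathcomp Require Import finset fintype bigop.
Local Close Scope classical_set_scope.
Lemma core (R : realFieldType) (I : finType) (U Z : {set I}) (m' : nat) :
  \sum_(T : {set I} | (T \subset U) && (#|T| == m'.+1)%N)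
     (#|T :&: Z|%:R / (1 + #|(U :&: Z) :\: T|)%N%:R : R)
  <= #|[set T : {set I} | (T \subset U) && (#|T| == m')%N]|%:R.
Proof.
set UZ := U :&: Z.
pose F (T : {set I}) (i : I) : R :=
  if [&& T \subset U, #|T| == m'.+1, i \in T & i \in Z]%N
  then 1 / (1 + #|UZ :\: T|)%N%:R else 0.
have -> : \sum_(T : {set I} | (T \subset U) && (#|T| == m'.+1)%N)
     (#|T :&: Z|%:R / (1 + #|UZ :\: T|)%N%:R : R) = \sum_T \sum_i F T i.
  rewrite big_mkcond /=; apply: eq_bigr => T _.
  case: ifP => hT.
    rewrite -sumr_const mulr_suml big_mkcond /=; apply: eq_bigr => i _.
    case/andP: hT => h1 h2; rewrite /F h1 h2 inE /=.
    by case: (i \in T); case: (i \in Z); rewrite //= mul1r div1r.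
  by rewrite big1 // => i _; rewrite /F; move: hT; case: (T \subset U); case: (#|T| == _).
rewrite exchange_big /=.
pose G (T : {set I}) (i : I) : R :=
  if [&& T \subset U, #|T| == m', i \in UZ & i \notin T]%N
  then 1 / #|UZ :\: T|%:R else 0.
have -> : \sum_i \sum_T F T i = \sum_i \sum_T G T i.
  apply: eq_bigr => i _.
  rewrite -big_mkcond -[RHS]big_mkcond /=.
  rewrite (reindex_onto (fun T => i |: T) (fun T => T :\ i)) /=; last first.
    by move=> T /and4P[_ _ iT _]; rewrite setD1K.
  apply: eq_big => T.
    case iT: (i \in T).
      have -> : ((i |: T) :\ i == T) = false.
        apply/negbTE/negP => /eqP e.
        by move: iT; rewrite -{1}e !inE eqxx.
      by rewrite andbF andbF andbF andbF.
    rewrite setU1K ?iT // eqxx andbT cardsU1 iT add1n eqSS subUset sub1set.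
    rewrite !inE eqxx /=.
    by case: (i \in U); case: (T \subset U); case: (#|T| == m'); case: (i \in Z).
  move=> /andP[/and4P[hU _ _ hZ] /eqP e].
  have iT : i \notin T by rewrite -e !inE eqxx.
  have iUZ : i \in UZ.
    by rewrite /UZ inE hZ andbT; apply: (subsetP hU); rewrite !inE eqxx.
  have -> : UZ :\: (i |: T) = (UZ :\: T) :\ i.
    apply/setP => x; rewrite !inE.
    by case: (x == i); case: (x \in T); case: (x \in UZ).
  rewrite [#|UZ :\: T|](cardsD1 i) !inE iT /=.
  by move: iUZ; rewrite /UZ inE => ->.
rewrite exchange_big /= -sumr_const [in X in _ <= X]big_mkcond /=.
apply: ler_sum => T _; rewrite inE.
case hT: ((T \subset U) && (#|T| == m')%N); last first.
  by rewrite big1 // => i _; rewrite /G; move: hT; case: (T \subset U); case: (#|T| == m').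
case/andP: hT => h1 h2.
have -> : \sum_i G T i = \sum_(i in UZ :\: T) (1 / #|UZ :\: T|%:R : R).
  rewrite [RHS]big_mkcond /=; apply: eq_bigr => i _.
  by rewrite /G h1 h2 /= in_setD andbC.
rewrite sumr_const.
have [->|c0] := eqVneq #|UZ :\: T| 0%N; first by rewrite mulr0n ler01.
by rewrite -[_ *+ _]mulr_natr div1r mulVf ?pnatr_eq0.
Qed.
Section W.
Variables (R : realType) (n m k : nat).
Hypotheses (hm : (1 <= m)%N) (hk : (k <= n)%N).
Local Notation N := (n + m)%N.
Variables (Zs : {set 'I_N}) (p : {ffun 'I_k -> 'I_N}).

Definition gT (T : {set 'I_N}) : R :=
  @acsM n m k R (fun i => i \in T) (fun i => i \in Zs) (fun j => p j).
Definition vT (T : {set 'I_N}) : bool :=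
  @valid_A n m (fun i => i \in T) && @valid_pi n m k (fun i => i \in T) (fun j => p j).
Definition Uset : {set 'I_N} := ~: @removed n m k (fun j => p j).

Lemma vTE T : vT T = [&& injectiveb p, T \subset Uset & #|T| == m].
Proof.
rewrite /vT /valid_A /valid_pi.
have -> : #|[pred i | ~~ (i \in T)]| = #|~: T|.
  by apply: eq_card => i; rewrite !inE.
have -> : (#|~: T| == n) = (#|T| == m).
  have := cardsC T; rewrite card_ord => e.
  apply/eqP/eqP => h; move: e; rewrite h; lia.
have -> : injectiveb (fun j => p j) = injectiveb p by [].
have -> : [forall j, ~~ (p j \in T)] = (T \subset Uset).
  apply/forallP/subsetP => [h i iT | h j].
    rewrite /Uset /removed !inE; apply/imsetP => -[j _ e].
    by move: (h j); rewrite -e iT.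
  apply/negP => pT; have := h _ pT; rewrite /Uset /removed !inE.
  by rewrite imset_f.
by case: (#|T| == m); case: (T \subset Uset); rewrite ?andbF ?andbT.
Qed.

Lemma cardU : injectiveb p -> #|Uset| = (n - k + m)%N.
Proof.
move=> /injectiveP ip.
have := cardsC (@removed n m k (fun j => p j)); rewrite card_ord.
rewrite /removed card_imset ?card_ord // => e.
rewrite /Uset /removed; lia.
Qed.


Lemma gTE (T : {set 'I_N}) : T \subset Uset ->
  gT T = #|T :&: Zs|%:R / (1 + #|(Uset :&: Zs) :\: T|)%N%:R.
Proof.
move=> TU; rewrite /gT /acsM.
have -> : @Pset n m k (fun i => i \in T) (fun j => p j) :&: @H0set n m (fun i => i \in T) (fun i => i \in Zs) = T :&: Zs.
  apply/setP => i; rewrite !inE.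
  case iT: (i \in T); rewrite ?andbF //= andbT.
  by have := subsetP TU i iT; rewrite /Uset inE => ->.
have -> : @Nminus n m k (fun i => i \in T) (fun i => i \in Zs) (fun j => p j) = (Uset :&: Zs) :\: T.
  apply/setP => i; rewrite /Uset !inE.
  by case: (i \in T); case: (i \in Zs); rewrite ?andbF ?andbT.
by [].
Qed.

Lemma SE (T : {set 'I_N}) : T \subset Uset ->
  @acsS n m k (fun i => i \in T) (fun i => i \in Zs) (fun j => p j) = #|Uset :&: Zs|.
Proof.
move=> TU; rewrite /acsS.
have -> : @Pset n m k (fun i => i \in T) (fun j => p j) :&: @H0set n m (fun i => i \in T) (fun i => i \in Zs) = (Uset :&: Zs) :&: T.
  apply/setP => i; rewrite !inE.
  case iT: (i \in T); rewrite ?andbF //= !andbT.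
  by have := subsetP TU i iT; rewrite /Uset inE => ->.
have -> : @Nminus n m k (fun i => i \in T) (fun i => i \in Zs) (fun j => p j) = (Uset :&: Zs) :\: T.
  apply/setP => i; rewrite /Uset !inE.
  by case: (i \in T); case: (i \in Zs); rewrite ?andbF ?andbT.
exact: cardsID.
Qed.

Definition bnd : R := m%:R / (n - k + 1)%N%:R.

Lemma sumW : \sum_T (if vT T then gT T else 0) <= bnd * \sum_T (if vT T then 1 else 0).
Proof.
case ip: (injectiveb p); last first.
  rewrite !big1 ?mulr0 // => T _; by rewrite vTE ip.
have -> : \sum_T (if vT T then gT T else 0) =
  \sum_(T : {set 'I_N} | (T \subset Uset) && (#|T| == m)%N)
     (#|T :&: Zs|%:R / (1 + #|(Uset :&: Zs) :\: T|)%N%:R : R).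
  rewrite [RHS]big_mkcond; apply: eq_bigr => T _; rewrite vTE ip /=.
  by case: ifP => // /andP[TU _]; rewrite gTE.
have -> : \sum_T (if vT T then 1 else 0 : R) =
    #|[set T : {set 'I_N} | T \subset Uset & #|T| == m]|%:R.
  rewrite -sumr_const [RHS]big_mkcond; apply: eq_bigr => T _.
  by rewrite vTE ip inE.
have [m' em] : exists m', m = m'.+1 by exists m.-1; lia.
have := core R _ Uset Zs m'; rewrite -em => h.
apply: le_trans h _.
rewrite !cards_draws cardU //.
rewrite /bnd.
have e := mul_bin_left (n - k + m) m'.
have e2 : (n - k + m - m')%N = (n - k + 1)%N by lia.
rewrite e2 -em in e.
rewrite mulrAC ler_pdivlMr; last by rewrite ltr0n; lia.
by rewrite -!natrM mulnC -e.
Qed.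

Lemma sumWb (b : {set 'I_N} -> R) (c : R) : 0 <= c ->
  (forall T, vT T -> b T = c) ->
  \sum_T (if vT T then gT T * b T else 0) <= bnd * \sum_T (if vT T then b T else 0).
Proof.
move=> c0 hb.
have -> : \sum_T (if vT T then gT T * b T else 0) = (\sum_T (if vT T then gT T else 0)) * c.
  rewrite mulr_suml; apply: eq_bigr => T _.
  by case h: (vT T); rewrite ?mul0r // hb.
have -> : \sum_T (if vT T then b T else 0) = (\sum_T (if vT T then 1 else 0)) * c.
  rewrite mulr_suml; apply: eq_bigr => T _.
  by case h: (vT T); rewrite ?mul0r ?mul1r // hb.
by rewrite mulrA ler_wpM2r // sumW.
Qed.

End W.
Local Open Scope classical_set_scope.
Lemma int_fin (R : realType) (d : measure_display) (Om : measurableType d)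
  (P : probability Om R) (V : finType) (W : Om -> V) (g : V -> R) :
  (forall v, d.-measurable [set w | W w = v]) -> (forall v, 0 <= g v) ->
  (\int[P]_w (g (W w))%:E = \sum_(v : V) (g v)%:E * P [set w | W w = v])%E.
Proof.
move=> mW g0.
have -> : (fun w => (g (W w))%:E) =
   (fun w => \sum_(v : V) ((g v)%:E * (\1_[set w | W w = v] w)%:E))%E.
  apply: funext => w; rewrite (bigD1 (W w)) //= big1 ?adde0.
    by rewrite indicE mem_set // mule1.
  by move=> v /negPf vw; rewrite indicE memNset ?mule0 //= => /eqP; rewrite eq_sym vw.
rewrite ge0_integral_sum //; last first.
- by move=> v w _; rewrite mule_ge0 // lee_fin.
- move=> v; apply/measurable_EFinP; apply: measurable_funM => //.

apply: eq_bigr => v _.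
rewrite ge0_integralZl_EFin //.
- by rewrite integral_indic // classical_sets.setIT.
by apply/measurable_EFinP; exact: measurable_indic.
Qed.
Local Close Scope classical_set_scope.
Lemma card_valid (R : realType) (n m k : nat) :
  \sum_(p : {ffun 'I_k -> 'I_(n+m)}) \sum_(T : {set 'I_(n+m)}) (if vT n m k p T then 1 else 0 : R)
  = ('C(n+m, n) * n ^_ k)%N%:R.
Proof.
rewrite exchange_big /=.
transitivity (\sum_(T : {set 'I_(n+m)}) (if #|~: T| == n then (n ^_ k)%:R else 0 : R)).
  apply: eq_bigr => T _.
  have eA : @valid_A n m (fun i => i \in T) = (#|~: T| == n).
    by rewrite /valid_A; congr (_ == _); apply: eq_card => i; rewrite !inE.
  rewrite /vT eA.
  case: ifP => h; last by rewrite big1.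
  rewrite /valid_pi -[n in RHS](eqP h) -[in RHS](card_ord k) -(card_inj_ffuns_on _ (mem (~: T))).
  rewrite -sumr_const [RHS]big_mkcond; apply: eq_bigr => f _.
  rewrite inE /= andbC; congr (if _ then _ else _); congr (_ && _).
  by apply/forallP/ffun_onP => H j; [rewrite inE; exact: H | have := H j; rewrite inE].
rewrite -big_mkcond /= (reindex_inj (@setC_inj _)) /= sumr_const.
have -> : #|[pred T : {set 'I_(n + m)} | #|~: ~: T| == n]| = #|[set T : {set 'I_(n+m)} | #|T| == n]|.
  by apply: eq_card => T; rewrite !inE setCK.
by rewrite card_draws card_ord natrM mulrC mulr_natr.
Qed.

Definition setOf (N : nat) (f : 'I_N -> bool) : {set 'I_N} := finset f.
Definition ffOf (k N : nat) (f : 'I_k -> 'I_N) : {ffun 'I_k -> 'I_N} := finfun f.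
Arguments setOf {N}.
Arguments ffOf {k N}.
Local Open Scope classical_set_scope.

Lemma setOfP (N : nat) (f : 'I_N -> bool) (T : {set 'I_N}) :
  (setOf f = T) <-> (f = fun i => i \in T).
Proof.
split => [<-|->]; first by apply: funext => i; rewrite /setOf inE.
by apply/setP => i; rewrite /setOf inE.
Qed.

Lemma ffOfP (k N : nat) (f : 'I_k -> 'I_N) (p : {ffun 'I_k -> 'I_N}) :
  (ffOf f = p) <-> (f = fun j => p j).
Proof.
split => [<-|->]; first by apply: funext => i; rewrite /ffOf ffunE.
by apply/ffunP => i; rewrite /ffOf ffunE.
Qed.

Lemma sum_pair (R : realType) (I J : finType) (F : I * J -> R) :
  \sum_(v : I * J) F v = \sum_i \sum_j F (i, j).
Proof. by rewrite pair_bigA; apply: eq_bigr => -[i j]. Qed.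

Lemma Pfine (R : realType) (d : measure_display) (Om : measurableType d)
  (P : probability Om R) (E : set Om) : measurable E -> P E = (fine (P E))%:E.
Proof. by move=> mE; rewrite fineK // fin_num_measure. Qed.

Lemma sum_fib1 (R : realType) (d : measure_display) (Om : measurableType d)
  (P : probability Om R) (V : finType) (W : Om -> V) :
  (forall v, d.-measurable [set w | W w = v]) ->
  \sum_v fine (P [set w | W w = v]) = 1.
Proof.
move=> mW; have := int_fin _ _ _ P _ W (fun _ => 1) mW (fun _ => ler01).
rewrite (_ : (fun w => (1:R)%:E) = cst 1%:E) // integral_cst // mul1e.
rewrite [X in X = _ -> _](_ : _ = 1%E); last exact: probability_setT.
under eq_bigr => v _ do rewrite mul1e (Pfine _ _ _ P _ (mW v)).
by rewrite sumEFin => -[].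
Qed.
End Aux.
Import Aux.
Local Open Scope classical_set_scope.

Local Open Scope ring_scope.

Theorem mainTheorem4 (R : realType) (d : measure_display) (Om : measurableType d)
  (P : probability Om R) (Xt : Type) (n m k : nat)
  (hn : (1 <= n)%N) (hm : (1 <= m)%N) (hk : (k <= n)%N)
  (G : set (set (Xt * R * set R)))
  (X : 'I_(n + m) -> Om -> Xt) (Y : 'I_(n + m) -> Om -> R)
  (C : 'I_(n + m) -> Om -> set R)
  (A : Om -> 'I_(n + m) -> bool) (pi : Om -> 'I_k -> 'I_(n + m)) :
  (* G is a sigma-algebra on the space of data triples, the data are
     G-measurable, and the event {Y \in C} is G-measurable *)
  sigma_algebra setT G ->
  (forall i B, G B -> d.-measurable [set w | B (X i w, Y i w, C i w)]) ->
  G [set t | inC t] ->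
  (* the data are jointly exchangeable *)
  exchangeable P G X Y C ->
  (* A and pi are measurable *)
  (forall a, d.-measurable [set w | A w = a]) ->
  (forall p, d.-measurable [set w | pi w = p]) ->
  (* A is uniform over binary vectors with n zeros, pi is a uniform ordered
     choice of k distinct labeled indices, and (A, pi) is independent of the data *)
  (forall (B : 'I_(n + m) -> set (Xt * R * set R)) a p,
      (forall i, G (B i)) -> @valid_A n m a -> @valid_pi n m k a p ->
      (P (data_event X Y C B `&` [set w | A w = a] `&` [set w | pi w = p])
       = P (data_event X Y C B)
         * ((('C(n + m, n) * n ^_ k)%N%:R)^-1)%:E)%E) ->
  let z := fun w i => inC (X i w, Y i w, C i w) in
  let Mk := fun w => @acsM n m k R (A w) (z w) (pi w) : R in
  let Sk := fun w => @acsS n m k (A w) (z w) (pi w) in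
  let bound := (m%:R / (n - k + 1)%N%:R : R) in
  (* E[M_k | S_k] <= bound, i.e. E[M_k 1{S_k = s}] <= bound * P(S_k = s) for all s *)
  (forall s : nat,
      (\int[P]_w ((Mk w * (Sk w == s)%:R)%:E) <= bound%:E * P [set w | Sk w = s])%E)
  /\ (\int[P]_w ((Mk w)%:E) <= bound%:E)%E.
Proof.
move=> sG mD GC _ mA mpi hind z Mk Sk bound.
case: sG => G0 GCo _.
pose K : R := ('C(n + m, n) * n ^_ k)%N%:R.
have K0 : 0 < K.
  rewrite ltr0n muln_gt0 bin_gt0 leq_addr /= ffact_gt0; exact: hk.
pose Bz (Zs : {set 'I_(n+m)}) (i : 'I_(n+m)) : set (Xt * R * set R) :=
  [set t | inC t = (i \in Zs)].
have GBz : forall Zs i, G (Bz Zs i).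
  move=> Zs i; rewrite /Bz; case: (i \in Zs).
    by rewrite (_ : [set t | inC t = true] = [set t | inC t]).
  rewrite (_ : [set t | inC t = false] = setT `\` [set t | inC t]); first exact: GCo.
  apply/seteqP; split => t /=; first by move=> h; split => //; rewrite h.
  by case=> _; case: (inC t).
pose Ez Zs := data_event X Y C (Bz Zs).
have EzE : forall Zs, Ez Zs = [set w | setOf (z w) = Zs].
  move=> Zs; apply/seteqP; split => w /=.
    move=> h; apply/setOfP; apply: funext => i; exact: (h i I).
  move=> /setOfP h i _; rewrite /Bz /=; exact: (congr1 (fun f => f i) h).
have mEz : forall Zs, d.-measurable (Ez Zs).
  move=> Zs; apply: fin_bigcap_measurable => //; last by move=> i _; apply: mD.
pose V := ({set 'I_(n+m)} * {ffun 'I_k -> 'I_(n+m)} * {set 'I_(n+m)})%type.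
pose W (w : Om) : V := ((setOf (z w), ffOf (pi w)), setOf (A w)).
have fibE : forall Zs p T, [set w | W w = ((Zs,p),T)] =
    Ez Zs `&` [set w | A w = (fun i => i \in T)] `&` [set w | pi w = (fun j => p j)].
  move=> Zs p T; rewrite EzE; apply/seteqP; split => w /=.
    by move=> [e1 e2 e3]; split; [split|]; [exact: e1|exact/setOfP|exact/ffOfP].
  by move=> [[e1 /setOfP e3] /ffOfP e2]; rewrite /W e1 e2 e3.
have mfib : forall v, d.-measurable [set w | W w = v].
  move=> [[Zs p] T]; rewrite fibE; apply: measurableI; first apply: measurableI.
  - exact: mEz.
  - exact: mA.
  - exact: mpi.
pose q v := fine (P [set w | W w = v]).
have Pq v : P [set w | W w = v] = (q v)%:E := Pfine _ _ _ P _ (mfib v).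
have q0 v : 0 <= q v by apply: fine_ge0; exact: measure_ge0.
have sumq : \sum_v q v = 1 := sum_fib1 _ _ _ P _ W mfib.
pose r Zs := fine (P (Ez Zs)).
have sumr : \sum_Zs r Zs = 1.
  rewrite /r; under eq_bigr do rewrite EzE.
  by apply: sum_fib1 => v; rewrite -EzE.
have r0 Zs : 0 <= r Zs by apply: fine_ge0; exact: measure_ge0.
have qvalid Zs p T : vT n m k p T -> q ((Zs,p),T) = r Zs / K.
  move=> /andP[vA vP]; rewrite /q fibE hind //.
  by rewrite (Pfine _ _ _ P _ (mEz Zs)) -EFinM.
have sumvalid : \sum_v (if vT n m k v.1.2 v.2 then q v else 0) = 1.
  rewrite sum_pair sum_pair -[RHS]sumr; apply: eq_bigr => Zs _.
  transitivity (r Zs / K * \sum_p \sum_T (if vT n m k p T then 1 else 0)).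
    rewrite mulr_sumr; apply: eq_bigr => p _; rewrite mulr_sumr; apply: eq_bigr => T _ /=.
    by case h: (vT n m k p T); rewrite ?mulr0 ?mulr1 // qvalid.
  by rewrite card_valid -/K mulfVK // lt0r_neq0.
have qinv Zs p T : ~~ vT n m k p T -> q ((Zs,p),T) = 0.
  move=> nv.
  have hs : \sum_v (if ~~ vT n m k v.1.2 v.2 then q v else 0) = 0.
    apply: (addrI 1); rewrite addr0 -[X in X + _]sumvalid -big_split /= -[RHS]sumq.
    by apply: eq_bigr => v _; case: (vT _ _ _ _ _); rewrite ?addr0 ?add0r.
  have := psumr_eq0P (P := xpredT) (fun v _ => _) hs (i := ((Zs,p),T)).
  rewrite /= nv; apply => // v; by case: ifP => // _; exact: q0.
pose gv (v : V) := gT R n m k v.1.1 v.1.2 v.2.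
have key : forall b : V -> R,
    (forall Zs p, exists2 c, 0 <= c & forall T, vT n m k p T -> b ((Zs,p),T) = c) ->
    \sum_v gv v * b v * q v <= bound * \sum_v b v * q v.
  move=> b hb.
  rewrite !sum_pair mulr_sumr; apply: ler_sum => Z1 _.
  rewrite mulr_sumr; apply: ler_sum => p1 _.
  have [c c0 hc] := hb Z1 p1.
  have rK : 0 <= r Z1 / K by rewrite divr_ge0 // ltW.
  have -> : \sum_T gv ((Z1,p1),T) * b ((Z1,p1),T) * q ((Z1,p1),T) =
      r Z1 / K * \sum_T (if vT n m k p1 T then gT R n m k Z1 p1 T * b ((Z1,p1),T) else 0).
    rewrite mulr_sumr; apply: eq_bigr => T1 _.
    case h: (vT n m k p1 T1); first by rewrite qvalid // mulrC.
    by rewrite qinv ?h // !mulr0.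
  have -> : \sum_T b ((Z1,p1),T) * q ((Z1,p1),T) =
      r Z1 / K * \sum_T (if vT n m k p1 T then b ((Z1,p1),T) else 0).
    rewrite mulr_sumr; apply: eq_bigr => T1 _.
    case h: (vT n m k p1 T1); first by rewrite qvalid // mulrC.
    by rewrite qinv ?h // !mulr0.
  rewrite mulrCA ler_wpM2l //.
  exact: (sumWb R n m k hm hk Z1 p1 (fun T => b (Z1,p1,T)) c c0 hc).
have MkE w : Mk w = gv (W w).
  rewrite /Mk /gv /gT /=; congr (acsM _ _ _); apply: funext => i;
  by rewrite /setOf /ffOf ?inE ?ffunE.
pose Sv (v : V) := @acsS n m k (fun i => i \in v.2) (fun i => i \in v.1.1) (fun j => v.1.2 j).
have SkE w : Sk w = Sv (W w).
  rewrite /Sk /Sv /=; congr (acsS _ _ _); apply: funext => i;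
  by rewrite /setOf /ffOf ?inE ?ffunE.
have gv0 v : 0 <= gv v by rewrite /gv /gT /acsM divr_ge0.
split.
  move=> s.
  pose b1 (v : V) : R := (Sv v == s)%:R.
  have mS : d.-measurable [set w | Sk w = s].
    rewrite (_ : [set w | Sk w = s] = \bigcup_(v in [set v : V | Sv v = s]) [set w | W w = v]).
      by apply: fin_bigcup_measurable; [exact: finite_finset|move=> v _; exact: mfib].
    apply/seteqP; split => w /=.
      by move=> h; exists (W w) => //=; rewrite -SkE.
    by move=> [v /= h hv]; rewrite SkE hv.
  have -> : P [set w | Sk w = s] = (\int[P]_w (b1 (W w))%:E)%E.
    transitivity (P ([set w | Sk w = s] `&` setT)); first by rewrite setIT.
    rewrite -integral_indic //; apply: eq_integral => w _.
    rewrite indicE /b1 -SkE; case: (eqVneq (Sk w) s) => h.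
      by rewrite mem_set.
    by rewrite memNset //=; apply/eqP.
  under eq_integral => w _ do rewrite MkE SkE.
  rewrite (int_fin _ _ _ P _ W (fun v => gv v * b1 v) mfib); last first.
    by move=> v; rewrite mulr_ge0.
  rewrite (int_fin _ _ _ P _ W b1 mfib); last by move=> v; rewrite /b1.
  under eq_bigr do rewrite Pq -EFinM.
  under [X in (_ <= _ * X)%E]eq_bigr do rewrite Pq -EFinM.
  rewrite !sumEFin -EFinM lee_fin.
  apply: key => Zs p.
  exists ((#|Uset n m k p :&: Zs| == s)%:R); first by [].
  move=> T vt; rewrite /b1 /Sv /=.
  have := vt; rewrite (vTE n m k hm hk) => /and3P[_ TU _].
  by rewrite (SE n m k Zs p T TU).
under eq_integral => w _ do rewrite MkE.
rewrite (int_fin _ _ _ P _ W gv mfib gv0).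
under eq_bigr do rewrite Pq -EFinM.
rewrite sumEFin lee_fin.
have h : \sum_v gv v * 1 * q v <= bound * \sum_v 1 * q v.
  by apply: key => Zs p; exists 1.
have e1 : \sum_v gv v * 1 * q v = \sum_v gv v * q v.
  by apply: eq_bigr => v _; rewrite mulr1.
have e2 : \sum_v 1 * q v = 1.
  by rewrite -[RHS]sumq; apply: eq_bigr => v _; rewrite mul1r.
by move: h; rewrite e1 e2 mulr1.
Qed.
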